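(* Let $G$ be a graph without isolated vertices, let $F\subseteq\varphi(G)$, and let $Z$ be a nondeterministic read-once branching program representing $F$. Let $u$ be a node of $Z$ and let $M=\{\{x_1,y_1\},\dots,\{x_q,y_q\}\}$ be a matching of $G$ such that $\{x_1,\dots,x_q\}$ and $\{y_1,\dots,y_q\}$ are separated by $u$. Then there is a set $X$ of $q$ vertices of $G$ containing exactly one vertex of each $\{x_i,y_i\}$ such that for every source-sink path $P$ of $Z$ passing through $u$, $X\subseteq A(P)$ (i.e. every variable of $X$ occurs positively in $A(P)$).
   Context: $\varphi(G)$ is the CNF on variables $V(G)$ with clauses $(u\vee v)$ for $\{u,v\}\in E(G)$; Boolean functions are identified with their sets of satisfying assignments (sets of literals), and $F\subseteq\varphi(G)$ means every satisfying assignment of $F$ satisfies $\varphi(G)$. A nondeterministic read-once branching program (NROBP) over variable set $X$ is a directed acyclic graph with one source and one sink, some edges labelled by literals over $X$, such that each variable occurs on exactly one edge of every source-sink path; $A(P)$ is the set of literals labelling path $P$, and the NROBP represents the function whose satisfying assignments are the sets $A(P)$ over source-sink paths $P$. A variable $x$ is located before node $v$ if on every source-sink path through $v$, $x$ occurs on the prefix ending at $v$; it is located after $v$ if it occurs on the suffix starting at $v$ on every such path. Two sets $X,Y$ of variables are separated by $v$ if either all of $X$ are located before $v$ and all of $Y$ after $v$, or vice versa. *)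

(* Defs.v *)
From mathcomp Require Import all_boot.
Set Implicit Arguments. Unset Strict Implicit. Unset Printing Implicit Defensive.

Definition simple_graph (V : finType) (G : rel V) : Prop :=
  (forall x y, G x y = G y x) /\ (forall x, ~~ G x x).

Definition no_isolated (V : finType) (G : rel V) : Prop :=
  forall v, exists w, G v w.

(* Literals over V: (x, true) = x, (x, false) = ~x.
   Assignments: total functions V -> bool; the set of literals of f. *)
Definition lits (V : finType) (f : {ffun V -> bool}) : {set V * bool} :=
  [set (x, f x) | x : V].

Definition sat_phi (V : finType) (G : rel V) (f : {ffun V -> bool}) : bool :=
  [forall x, forall y, G x y ==> (f x || f y)].

Definition sub_phi (V : finType) (G : rel V) (F : {set {ffun V -> bool}}) : Prop :=
  forall f, f \in F -> sat_phi G f.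

(* A branching-program skeleton: nodes N, edges E (multi-edges allowed),
   each edge with a source, a target and an optional literal label. *)
Record bp (V : finType) := BP {
  bp_node : finType;
  bp_edge : finType;
  bp_src : bp_edge -> bp_node;
  bp_dst : bp_edge -> bp_node;
  bp_lab : bp_edge -> option (V * bool);
  bp_source : bp_node;
  bp_sink : bp_node }.

Section BP.
Variables (V : finType) (Z : bp V).

Fixpoint walk (a : bp_node Z) (p : seq (bp_edge Z)) (b : bp_node Z) : bool :=
  match p with
  | [::] => a == b
  | e :: p' => (bp_src e == a) && walk (bp_dst e) p' b
  end.

Definition st_path (p : seq (bp_edge Z)) : bool := walk (bp_source Z) p (bp_sink Z).

Definition A (p : seq (bp_edge Z)) : {set V * bool} :=
  [set l | has (fun e => bp_lab e == Some l) p].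

Definition occurs (x : V) (p : seq (bp_edge Z)) : nat :=
  count (fun e => if bp_lab e is Some l then l.1 == x else false) p.

Definition is_NROBP : Prop :=
  (forall n p, walk n p n -> p = [::]) /\
  (forall n, (~~ [exists e, bp_dst e == n]) = (n == bp_source Z)) /\
  (forall n, (~~ [exists e, bp_src e == n]) = (n == bp_sink Z)) /\
  (forall p, st_path p -> forall x, occurs x p = 1%N).

Definition represents (F : {set {ffun V -> bool}}) : Prop :=
  forall f, f \in F <-> exists p, st_path p /\ A p = lits f.

Definition split_at (v : bp_node Z) (p1 p2 : seq (bp_edge Z)) : bool :=
  walk (bp_source Z) p1 v && walk v p2 (bp_sink Z).

Definition located_before (x : V) (v : bp_node Z) : Prop :=
  forall p1 p2, split_at v p1 p2 -> (occurs x p1 > 0)%N.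

Definition located_after (x : V) (v : bp_node Z) : Prop :=
  forall p1 p2, split_at v p1 p2 -> (occurs x p2 > 0)%N.

Definition separated (X Y : {set V}) (v : bp_node Z) : Prop :=
  ((forall x, x \in X -> located_before x v) /\ (forall y, y \in Y -> located_after y v))
  \/
  ((forall x, x \in X -> located_after x v) /\ (forall y, y \in Y -> located_before y v)).

End BP.

Definition is_matching (V : finType) (G : rel V) (q : nat) (x y : 'I_q -> V) : Prop :=
  (forall i, G (x i) (y i)) /\ injective x /\ injective y /\
  (forall i j, x i != y j).

(* Main.v *)
Require Import Defs.
From mathcomp Require Import all_boot.
From mathcomp Require Import zify.
From Stdlib Require Import Classical.

Set Implicit Arguments. Unset Strict Implicit.
Section H.
Variables (V : finType) (Z : bp V).

Lemma walk_cat a b c (p q : seq (bp_edge Z)) :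
  walk a p b -> walk b q c -> walk a (p ++ q) c.
Proof.
elim: p a => [|e p IH] a /=; first by move/eqP->.
by case/andP=> -> /IH H /H ->.
Qed.

Lemma A_cat l (p q : seq (bp_edge Z)) : (l \in A (p ++ q)) = (l \in A p) || (l \in A q).
Proof. by rewrite !inE has_cat. Qed.

Lemma occurs_lit v (p : seq (bp_edge Z)) : (0 < occurs v p)%N -> exists b, (v, b) \in A p.
Proof.
rewrite /occurs -has_count => /hasP [e ep].
case E: (bp_lab e) => [[w b]|] //= /eqP Hw; subst w.
exists b; rewrite inE; apply/hasP; exists e => //; by rewrite E.
Qed.

Lemma two_lits v (p : seq (bp_edge Z)) :
  (v, true) \in A p -> (v, false) \in A p -> (1 < occurs v p)%N.
Proof.
rewrite !inE => h1 h2.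
have := count_predUI (fun e => bp_lab e == Some (v,true)) (fun e => bp_lab e == Some (v,false)) p.
have -> : count (predI (fun e => bp_lab e == Some (v,true)) (fun e => bp_lab e == Some (v,false))) p = 0%N.
  apply/eqP; rewrite -leqn0 leqNgt -has_count; apply/hasPn => e _ /=.
  by apply/negP => /andP[/eqP -> /eqP].
rewrite addn0 => Heq.
have S : (count (predU (fun e => bp_lab e == Some (v,true)) (fun e => bp_lab e == Some (v,false))) p <= occurs v p)%N.
  apply: sub_count => e /= /orP [] /eqP -> //=.
move: h1 h2; rewrite !has_count => h1 h2.
apply: leq_trans S; rewrite Heq; exact: leq_add h1 h2.
Qed.

Lemma in_lits (f : {ffun V -> bool}) v b : ((v, b) \in lits f) = (b == f v).
Proof.
apply/imsetP/eqP => [[w _ [-> ->]] // | ->]; by exists v.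
Qed.

Lemma A_lits (p : seq (bp_edge Z)) :
  (forall x, occurs x p = 1%N) -> exists f, A p = lits f.
Proof.
move=> H1; exists [ffun v => (v, true) \in A p]; apply/setP => [[v b]].
rewrite in_lits ffunE.
have [b0 Hb0] : exists b, (v,b) \in A p by apply: occurs_lit; rewrite H1.
case: b; first by case: ((v,true) \in A p).
case E: ((v, true) \in A p) => /=.
  by apply/negP => E2; have := two_lits E E2; rewrite H1.
by case: b0 Hb0 E => // ->.
Qed.

Definition Good (u : bp_node Z) (v : V) : Prop :=
  forall p1 p2, split_at u p1 p2 -> (v, true) \in A (p1 ++ p2).

Lemma core (F : {set {ffun V -> bool}}) (P : {ffun V -> bool} -> Prop)
  (HF : forall f, f \in F -> P f) (HZ : is_NROBP Z) (HZF : represents Z F)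
  (u : bp_node Z) a b (Hab : forall f, P f -> f a || f b)
  (Ha : located_before a u) (Hb : located_after b u) :
  Good u a \/ Good u b.
Proof.
case: (classic (Good u a)) => [|na]; [by left | right].
move=> p1' p2' S'.
case E: ((b, true) \in A (p1' ++ p2')) => //; exfalso.
have [p1 [p2 [S1 N1]]] : exists p1 p2, split_at u p1 p2 /\ (a,true) \notin A (p1++p2).
  apply: NNPP => C; apply: na => p1 p2 S1; apply/negPn/negP => N; apply C; by exists p1, p2.
have Fa : (a, false) \in A p1.
  have [c Hc] := occurs_lit (Ha _ _ S1).
  case: c Hc => // Hc; by rewrite A_cat Hc in N1.
have Fb : (b, false) \in A p2'.
  have [c Hc] := occurs_lit (Hb _ _ S').
  case: c Hc => // Hc; by rewrite A_cat Hc orbT in E.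
case/andP: S1 => w1 _; case/andP: S' => _ w2.
have sQ : st_path (p1 ++ p2') := walk_cat w1 w2.
have [f Hf] := A_lits (HZ.2.2.2 _ sQ).
have fF : f \in F by apply/HZF; exists (p1 ++ p2').
have := Hab f (HF f fF).
have : (a, false) \in lits f by rewrite -Hf A_cat Fa.
have : (b, false) \in lits f by rewrite -Hf A_cat Fb orbT.
by rewrite !in_lits => /eqP <- /eqP <-.
Qed.
End H.

Theorem proposition2 (V : finType) (G : rel V)
  (HG : simple_graph G) (Hiso : no_isolated G)
  (F : {set {ffun V -> bool}}) (HF : sub_phi G F)
  (Z : bp V) (HZ : is_NROBP Z) (HZF : represents Z F)
  (u : bp_node Z) (q : nat) (x y : 'I_q -> V)
  (HM : is_matching G x y)
  (Hsep : separated [set x i | i : 'I_q] [set y i | i : 'I_q] u) :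
  exists X : {set V},
    #|X| = q /\
    (forall i, (x i \in X) (+) (y i \in X)) /\
    (forall p1 p2, split_at u p1 p2 -> forall v, v \in X -> (v, true) \in A (p1 ++ p2)).
Proof.
case: HM => [HGxy [injx [injy Hxy]]].
have HP : forall f, f \in F -> sat_phi G f := HF.
have sat1 : forall f i, sat_phi G f -> f (x i) || f (y i).
  by move=> f i /forallP /(_ (x i)) /forallP /(_ (y i)) /implyP; apply.
have choice : forall i, exists z : V, (z = x i \/ z = y i) /\ Good u z.
  move=> i.
  case: Hsep => [[Hx Hy] | [Hx Hy]].
    have [] := core HP HZ HZF (sat1^~ i) (Hx _ (imset_f _ (isT : i \in predT))) (Hy _ (imset_f _ (isT : i \in predT))).
      by exists (x i); split; [left|].
    by exists (y i); split; [right|].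
  have [] := core HP HZ HZF (a := y i) (b := x i) _ (Hy _ (imset_f _ (isT : i \in predT))) (Hx _ (imset_f _ (isT : i \in predT))).
  - by move=> f /(sat1 f i); rewrite orbC.
  - by exists (y i); split; [right|].
  - by exists (x i); split; [left|].
have [z Hz] := fin_all_exists choice.
have zinj : injective z.
  move=> i j E.
  case: (Hz i) => [[] Ei _]; case: (Hz j) => [[] Ej _]; rewrite Ei Ej in E.
  - exact: injx.
  - by move: (Hxy i j); rewrite E eqxx.
  - by move: (Hxy j i); rewrite E eqxx.
  - exact: injy.
exists [set z i | i : 'I_q]; split; first by rewrite card_imset // card_ord.
split.
  move=> i.
  have Hxi : (x i \in [set z i | i : 'I_q]) = (z i == x i).
    apply/imsetP/eqP => [[j _ E] | <-]; last by exists i.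
    case: (Hz j) => [[] Ej _].
      by rewrite Ej in E; rewrite (injx _ _ E).
    by move: (Hxy i j); rewrite E Ej eqxx.
  have Hyi : (y i \in [set z i | i : 'I_q]) = (z i == y i).
    apply/imsetP/eqP => [[j _ E] | <-]; last by exists i.
    case: (Hz j) => [[] Ej _].
      by move: (Hxy j i); rewrite E Ej eqxx.
    by rewrite Ej in E; rewrite (injy _ _ E).
  rewrite Hxi Hyi.
  case: (Hz i) => [[] -> _]; rewrite eqxx /=.
    by rewrite (negbTE (Hxy i i)).
  by rewrite eq_sym (negbTE (Hxy i i)).
move=> p1 p2 S v /imsetP [i _ ->].
by case: (Hz i) => [_ HG0]; apply: HG0.
Qed.
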